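(* Let $\mathcal S$ be a trajectory set and fix $n_0\in\mathbb N$. Suppose that for every $S\in\mathcal S$ and every $j\le n_0-1$ the node $\mathcal S_{(S,j)}$ is not an arbitrage node of type II. If $(V,n,H)$ is a positive simple portfolio with maturity $n\le n_0$, then $\Pi^{V,n,H}_j(S)\ge0$ for every $j\in\mathbb N_0$ and every $S\in\mathcal S$.
   Context: Fix $s_0\in\mathbb R$. A trajectory set is any set $\mathcal S$ of real sequences $S=(S_j)_{j\in\mathbb N_0}$ with $S_0=s_0$. A simple portfolio $(V,n,H)$ (with maturity $n$) consists of $V\in\mathbb R$, $n\in\mathbb N$ and nonanticipating functions $H_i:\mathcal S\to\mathbb R$, $0\le i\le n-1$ (i.e. $H_i(S)=h_i(S_0,\dots,S_i)$ for arbitrary $h_i:\mathbb R^{i+1}\to\mathbb R$). Its wealth is $\Pi^{V,n,H}_j(S)=V+\sum_{i=0}^{\min\{j,n\}-1}H_i(S)(S_{i+1}-S_i)$, $\Pi^{V,n,H}_\infty:=\Pi^{V,n,H}_n$; it is positive if $V\ge0$ and $\Pi^{V,n,H}_\infty(S)\ge0$ for all $S\in\mathcal S$. For $S\in\mathcal S$, $j\in\mathbb N_0$, the node is $\mathcal S_{(S,j)}=\{\tilde S\in\mathcal S:(\tilde S_0,\dots,\tilde S_j)=(S_0,\dots,S_j)\}$. It is an arbitrage node if for some $\varepsilon\in\{-1,1\}$, $\varepsilon(\tilde S_{j+1}-S_j)\ge0$ for all $\tilde S\in\mathcal S_{(S,j)}$ with strict inequality for at least one; of type I if some $S'\in\mathcal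 S_{(S,j)}$ has $S'_{j+1}=S_j$, and of type II otherwise. *)

(* Defs.v *)
From Stdlib Require Import Reals Lra Lia List.
Open Scope R_scope.

Definition seqR := nat -> R.

Definition trajectory_set (s0 : R) (Sset : seqR -> Prop) : Prop :=
  forall S, Sset S -> S 0%nat = s0.

Definition prefix (S : seqR) (i : nat) : list R := map S (seq 0 (Datatypes.S i)).

Definition nonanticipating (Sset : seqR -> Prop) (n : nat)
  (H : nat -> seqR -> R) : Prop :=
  forall i, (i <= n - 1)%nat ->
    exists h : list R -> R, forall S, Sset S -> H i S = h (prefix S i).

Fixpoint gains (H : nat -> seqR -> R) (S : seqR) (m : nat) : R :=
  match m with
  | O => 0
  | Datatypes.S k => gains H S k + H k S * (S (Datatypes.S k) - S k)
  end.

Definition wealth (V : R) (n : nat) (H : nat -> seqR -> R) (j : nat) (S : seqR) : R :=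
  V + gains H S (Nat.min j n).

Definition wealth_inf (V : R) (n : nat) (H : nat -> seqR -> R) (S : seqR) : R :=
  wealth V n H n S.

Definition simple_portfolio (Sset : seqR -> Prop) (V : R) (n : nat)
  (H : nat -> seqR -> R) : Prop :=
  (1 <= n)%nat /\ nonanticipating Sset n H.

Definition positive_portfolio (Sset : seqR -> Prop) (V : R) (n : nat)
  (H : nat -> seqR -> R) : Prop :=
  simple_portfolio Sset V n H /\ 0 <= V /\
  forall S, Sset S -> 0 <= wealth_inf V n H S.

Definition node (Sset : seqR -> Prop) (S : seqR) (j : nat) (T : seqR) : Prop :=
  Sset T /\ forall k, (k <= j)%nat -> T k = S k.

Definition arbitrage_node (Sset : seqR -> Prop) (S : seqR) (j : nat) : Prop :=
  exists eps : R, (eps = -1 \/ eps = 1) /\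
    (forall T, node Sset S j T -> 0 <= eps * (T (Datatypes.S j) - S j)) /\
    (exists T, node Sset S j T /\ 0 < eps * (T (Datatypes.S j) - S j)).

Definition type_I_node (Sset : seqR -> Prop) (S : seqR) (j : nat) : Prop :=
  exists T, node Sset S j T /\ T (Datatypes.S j) = S j.

Definition arbitrage_node_typeII (Sset : seqR -> Prop) (S : seqR) (j : nat) : Prop :=
  arbitrage_node Sset S j /\ ~ type_I_node Sset S j.

(* Main.v *)
Require Import Defs.
From Stdlib Require Import Reals.
From Stdlib Require Import Lra Lia List.
Open Scope R_scope.

Lemma prefix_node (Sset : seqR -> Prop) X Y j i :
  node Sset X j Y -> (i <= j)%nat -> prefix Y i = prefix X i.
Proof.
  intros [_ HY] Hi. unfold prefix. apply map_ext_in. intros k Hk.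
  apply in_seq in Hk. apply HY. lia.
Qed.

Lemma H_node Sset n H X Y j i :
  nonanticipating Sset n H -> Sset X -> node Sset X j Y ->
  (i <= j)%nat -> (i <= n - 1)%nat -> H i Y = H i X.
Proof.
  intros Hna HX HYn Hij Hin. destruct (Hna i Hin) as [h Hh].
  rewrite (Hh Y (proj1 HYn)), (Hh X HX). f_equal. eapply prefix_node; eauto.
Qed.

Lemma gains_node Sset n H X Y j :
  nonanticipating Sset n H -> Sset X -> node Sset X j Y -> (j <= n)%nat ->
  forall m, (m <= j)%nat -> gains H Y m = gains H X m.
Proof.
  intros Hna HX HYn Hjn m. induction m as [|m IH]; intros Hm; simpl; auto.
  rewrite IH by lia. rewrite (H_node Sset n H X Y j m) by (auto; lia).
  destruct HYn as [_ HY]. rewrite (HY (Datatypes.S m)), (HY m) by lia. reflexivity.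
Qed.

Theorem lemma5p7 (s0 : R) (Sset : seqR -> Prop) (n0 : nat) :
  trajectory_set s0 Sset ->
  (1 <= n0)%nat ->
  (forall S j, Sset S -> (j <= n0 - 1)%nat -> ~ arbitrage_node_typeII Sset S j) ->
  forall (V : R) (n : nat) (H : nat -> seqR -> R),
    positive_portfolio Sset V n H ->
    (n <= n0)%nat ->
    forall (j : nat) (S : seqR), Sset S -> 0 <= wealth V n H j S.
Proof.
  intros _ _ Hnoarb V n H [[_ Hna] [HV Hpos]] Hn0.
  assert (Hk : forall k X, Sset X -> 0 <= wealth V n H (n - k) X).
  { induction k as [|k IH]; intros X HX.
    - replace (n - 0)%nat with n by lia. apply Hpos, HX.
    - destruct (Nat.le_gt_cases n k) as [Hle|Hlt].
      + replace (n - Datatypes.S k)%nat with (n - k)%nat by lia. auto.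
      + set (j := (n - Datatypes.S k)%nat).
        assert (Hj : (Datatypes.S j = n - k)%nat) by (unfold j; lia).
        assert (Hjn : (j < n)%nat) by (unfold j; lia).
        assert (Hstep : forall Y, node Sset X j Y ->
                  0 <= wealth V n H j X + H j X * (Y (Datatypes.S j) - X j)).
        { intros Y HYn. pose proof (IH Y (proj1 HYn)) as HY.
          rewrite <- Hj in HY. unfold wealth in *.
          rewrite Nat.min_l in * by lia. simpl in HY.
          rewrite (gains_node Sset n H X Y j Hna HX HYn) in HY by lia.
          rewrite (H_node Sset n H X Y j j Hna HX HYn) in HY by lia.
          rewrite ((proj2 HYn) j) in HY by lia. lra. }
        destruct (Rle_or_lt 0 (wealth V n H j X)) as [Hw|Hw]; [exact Hw|].
        exfalso.
        assert (HXn : node Sset X j X) by (split; auto).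
        assert (Hpos' : forall Y, node Sset X j Y ->
                  0 < H j X * (Y (Datatypes.S j) - X j)).
        { intros Y HYn. pose proof (Hstep Y HYn). lra. }
        apply (Hnoarb X j HX ltac:(lia)).
        split.
        * destruct (Rtotal_order (H j X) 0) as [Hc|[Hc|Hc]].
          -- exists (-1). split; [auto|split].
             ++ intros Y HYn. pose proof (Hpos' Y HYn). nra.
             ++ exists X. split; auto. pose proof (Hpos' X HXn). nra.
          -- pose proof (Hpos' X HXn). rewrite Hc in H0. lra.
          -- exists 1. split; [auto|split].
             ++ intros Y HYn. pose proof (Hpos' Y HYn). nra.
             ++ exists X. split; auto. pose proof (Hpos' X HXn). nra.
        * intros [Y [HYn HYe]]. pose proof (Hpos' Y HYn). rewrite HYe in H0. lra. }
  intros j X HX.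
  destruct (Nat.le_gt_cases n j) as [Hle|Hlt].
  - unfold wealth. rewrite Nat.min_r by lia.
    pose proof (Hk 0%nat X HX) as Hw. unfold wealth in Hw.
    replace (n - 0)%nat with n in Hw by lia. rewrite Nat.min_id in Hw. exact Hw.
  - replace j with (n - (n - j))%nat by lia. auto.
Qed.
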